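(* Let $\langle X,d\rangle$ be a metric space with completion $\langle\widehat{X},\widehat{d}\rangle$. The following are equivalent: (1) $\widehat{X}$ is cofinally Bourbaki quasi-complete; (2) every Cauchy-continuous function $f$ from $X$ to any metric space $\langle Y,\rho\rangle$ maps every cofinally Bourbaki quasi-Cauchy sequence in $X$ to a sequence in $Y$ that has a Cauchy subsequence; (3) every Cauchy-continuous function from $X$ to any metric space $\langle Y,\rho\rangle$ maps every cofinally Bourbaki quasi-Cauchy sequence in $X$ to a cofinally Cauchy sequence in $Y$; (4) every Cauchy-continuous function from $X$ to any metric space $\langle Y,\rho\rangle$ maps every cofinally Bourbaki quasi-Cauchy sequence in $X$ to a cofinally Bourbaki-Cauchy sequence in $Y$; (5) every real-valued Cauchy-continuous function on $X$ maps every cofinally Bourbaki quasi-Cauchy sequence in $X$ to a cofinally Bourbaki-Cauchy sequence in $\mathbb{R}$; (6) every cofinally Bourbaki quasi-Cauchy sequence in $X$ has a Cauchy subsequence.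
   Context: A function is Cauchy-continuous if it maps Cauchy sequences to Cauchy sequences. For $\varepsilon>0$, an $\varepsilon$-chain joining $x,y$ is a finite sequence $x=x_0,\dots,x_n=y$ with consecutive distances $<\varepsilon$. A sequence $\langle x_n\rangle$ in a metric space is cofinally Bourbaki quasi-Cauchy if for every $\varepsilon>0$ there is an infinite $N_\varepsilon\subseteq\mathbb{N}$ such that any $x_j,x_k$ with $j,k\in N_\varepsilon$ can be joined by an $\varepsilon$-chain (in that space); a metric space is cofinally Bourbaki quasi-complete if every such sequence has a cluster point. A sequence $\langle y_n\rangle$ in $\langle Y,\rho\rangle$ is cofinally Cauchy if for every $\varepsilon>0$ there is an infinite $N_\varepsilon\subseteq\mathbb{N}$ with $\rho(y_n,y_m)<\varepsilon$ for $n,m\in N_\varepsilon$. With $S^1_\rho(p,\varepsilon)$ the open $\varepsilon$-ball about $p$ and $S^{m}_\rho(p,\varepsilon)=\{y:\rho(y,S^{m-1}_\rho(p,\varepsilon))<\varepsilon\}$, $\langle y_n\rangle$ is cofinally Bourbaki-Cauchy if for every $\varepsilon>0$ there exist an infinite $N_\varepsilon\subseteq\mathbb{N}$, $m\in\mathbb{N}$, $p\in Y$ with $y_n\in S^m_\rho(p,\varepsilon)$ for all $n\in N_\varepsilon$. *)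

(* Defs.v *)
From Stdlib Require Import Reals Lra.
Open Scope R_scope.

Definition is_metric {T : Type} (d : T -> T -> R) : Prop :=
  (forall x y, 0 <= d x y) /\
  (forall x y, d x y = 0 <-> x = y) /\
  (forall x y, d x y = d y x) /\
  (forall x y z, d x z <= d x y + d y z).

Definition cauchy_seq {T : Type} (d : T -> T -> R) (x : nat -> T) : Prop :=
  forall eps, 0 < eps -> exists N, forall n m, (N <= n)%nat -> (N <= m)%nat ->
    d (x n) (x m) < eps.

Definition converges {T : Type} (d : T -> T -> R) (x : nat -> T) : Prop :=
  exists p, forall eps, 0 < eps -> exists N, forall n, (N <= n)%nat -> d (x n) p < eps.

Definition complete_metric {T : Type} (d : T -> T -> R) : Prop :=
  forall x : nat -> T, cauchy_seq d x -> converges d x.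

Definition cauchy_continuous {X Y : Type} (d : X -> X -> R) (rho : Y -> Y -> R)
  (f : X -> Y) : Prop :=
  forall x : nat -> X, cauchy_seq d x -> cauchy_seq rho (fun n => f (x n)).

Definition infinite_nat (N : nat -> Prop) : Prop :=
  forall k, exists n, (k <= n)%nat /\ N n.

Definition eps_chain {T : Type} (d : T -> T -> R) (eps : R) (x y : T) : Prop :=
  exists (n : nat) (s : nat -> T), s 0%nat = x /\ s n = y /\
    forall i, (i < n)%nat -> d (s i) (s (S i)) < eps.

Definition cofinally_bourbaki_quasi_cauchy {T : Type} (d : T -> T -> R)
  (x : nat -> T) : Prop :=
  forall eps, 0 < eps -> exists N, infinite_nat N /\
    forall j k, N j -> N k -> eps_chain d eps (x j) (x k).

Definition cluster_point {T : Type} (d : T -> T -> R) (x : nat -> T) (p : T) : Prop :=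
  forall eps, 0 < eps -> forall k, exists n, (k <= n)%nat /\ d (x n) p < eps.

Definition cofinally_bourbaki_quasi_complete {T : Type} (d : T -> T -> R) : Prop :=
  forall x : nat -> T, cofinally_bourbaki_quasi_cauchy d x -> exists p, cluster_point d x p.

Definition cofinally_cauchy {T : Type} (d : T -> T -> R) (y : nat -> T) : Prop :=
  forall eps, 0 < eps -> exists N, infinite_nat N /\
    forall n m, N n -> N m -> d (y n) (y m) < eps.

(** S_aux d p eps k is S^{k+1}_d(p, eps): S^1 is the open ball about p and
    S^{m} = {y : d(y, S^{m-1}) < eps} = {y : exists z in S^{m-1}, d y z < eps}. *)
Fixpoint S_aux {T : Type} (d : T -> T -> R) (p : T) (eps : R) (k : nat) : T -> Prop :=
  match k with
  | O => fun y => d p y < eps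
  | S k' => fun y => exists z, S_aux d p eps k' z /\ d y z < eps
  end.

Definition S_ball {T : Type} (d : T -> T -> R) (p : T) (m : nat) (eps : R) : T -> Prop :=
  S_aux d p eps (m - 1).

Definition cofinally_bourbaki_cauchy {T : Type} (d : T -> T -> R) (y : nat -> T) : Prop :=
  forall eps, 0 < eps -> exists N, infinite_nat N /\ exists (m : nat) (p : T),
    (1 <= m)%nat /\ forall n, N n -> S_ball d p m eps (y n).

Definition has_cauchy_subseq {T : Type} (d : T -> T -> R) (y : nat -> T) : Prop :=
  exists phi : nat -> nat, (forall n, (phi n < phi (S n))%nat) /\
    cauchy_seq d (fun n => y (phi n)).

Definition is_completion {X Xh : Type} (d : X -> X -> R) (dh : Xh -> Xh -> R)
  (i : X -> Xh) : Prop :=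
  is_metric dh /\ complete_metric dh /\
  (forall x y, dh (i x) (i y) = d x y) /\
  (forall z eps, 0 < eps -> exists x, dh z (i x) < eps).

(* Main.v *)
Require Import Defs.
From Stdlib Require Import Reals Lra Lia Classical ClassicalEpsilon.
Open Scope R_scope.

Lemma small (eps : R) : 0 < eps -> exists J, forall n, (J <= n)%nat -> / (INR n + 1) < eps.
Proof.
  intros He. destruct (INR_unbounded (/ eps)) as [J HJ]. exists J. intros n Hn.
  apply le_INR in Hn. assert (Hi : 0 < / eps) by (apply Rinv_0_lt_compat; lra).
  rewrite <- (Rinv_inv eps). apply Rinv_lt_contravar.
  - apply Rmult_lt_0_compat; lra.
  - lra.
Qed.

Lemma extract (P : nat -> nat -> Prop) :
  (forall j K, exists n, (K <= n)%nat /\ P j n) ->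
  exists phi : nat -> nat, (forall j, (phi j < phi (S j))%nat) /\ forall j, P j (phi j).
Proof.
  intros H.
  set (g := fun j K => proj1_sig (constructive_indefinite_description _ (H j K))).
  assert (Hg : forall j K, (K <= g j K)%nat /\ P j (g j K)).
  { intros j K. unfold g. destruct (constructive_indefinite_description _ (H j K)); auto. }
  exists (fix phi j := match j with O => g O O | S j' => g (S j') (S (phi j')) end).
  split.
  - intros j. simpl. destruct (Hg (S j) (S ((fix phi (j0 : nat) : nat :=
       match j0 with
       | 0%nat => g 0%nat 0%nat
       | S j' => g (S j') (S (phi j'))
       end) j))). lia.
  - intros [|j]; simpl; apply Hg.
Qed.

Lemma phi_ge (phi : nat -> nat) : (forall j, (phi j < phi (S j))%nat) -> forall j, (j <= phi j)%nat.
Proof. intros H j. induction j. lia. specialize (H j). lia. Qed.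

Lemma chain_prepend {T} (d : T -> T -> R) eps x y z :
  d x y < eps -> eps_chain d eps y z -> eps_chain d eps x z.
Proof.
  intros Hxy [n [s [H0 [Hn Hs]]]].
  exists (S n), (fun m => match m with O => x | S m' => s m' end).
  split; [reflexivity|]. split; [exact Hn|].
  intros [|i] Hi; simpl.
  - rewrite H0. exact Hxy.
  - apply Hs. lia.
Qed.

Lemma chain_rev {T} (d : T -> T -> R) eps x y :
  (forall a b, d a b = d b a) -> eps_chain d eps x y -> eps_chain d eps y x.
Proof.
  intros Hsym [n [s [H0 [Hn Hs]]]].
  exists n, (fun m => s (n - m)%nat). split; [|split].
  - rewrite Nat.sub_0_r. exact Hn.
  - rewrite Nat.sub_diag. exact H0.
  - intros i Hi. rewrite Hsym. replace (n - i)%nat with (S (n - S i)) by lia.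
    apply Hs. lia.
Qed.

Lemma chain_append {T} (d : T -> T -> R) eps x y z :
  (forall a b, d a b = d b a) -> eps_chain d eps x y -> d y z < eps -> eps_chain d eps x z.
Proof.
  intros Hsym H Hyz. apply chain_rev; auto. apply chain_prepend with y.
  rewrite Hsym; auto. apply chain_rev; auto.
Qed.

Lemma rate_cauchy {T} (d : T -> T -> R) (Hm : is_metric d) (y : nat -> T) p :
  (forall j, d (y j) p < / (INR j + 1)) -> cauchy_seq d y.
Proof.
  destruct Hm as [_ [_ [Hsym Htri]]].
  intros H eps He. destruct (small (eps/2)) as [J HJ]; [lra|].
  exists J. intros n m Hn Hm. specialize (HJ _ Hn) as A. specialize (HJ _ Hm) as B.
  specialize (H n) as C. specialize (H m) as D.
  pose proof (Htri (y n) p (y m)). rewrite (Hsym p) in H0. lra.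
Qed.

Lemma cbqc_map {X Xh} (d : X -> X -> R) (dh : Xh -> Xh -> R) (i : X -> Xh)
  (Hi : forall a b, dh (i a) (i b) = d a b) x :
  cofinally_bourbaki_quasi_cauchy d x -> cofinally_bourbaki_quasi_cauchy dh (fun n => i (x n)).
Proof.
  intros H eps He. destruct (H eps He) as [N [HN Hc]]. exists N. split; auto.
  intros j k Hj Hk. destruct (Hc j k Hj Hk) as [n [s [H0 [Hn Hs]]]].
  exists n, (fun m => i (s m)). split; [|split].
  - rewrite H0; auto. - rewrite Hn; auto. - intros m Hm. rewrite Hi. auto.
Qed.

Lemma p1_p6 {X Xh} (d : X -> X -> R) (dh : Xh -> Xh -> R) (i : X -> Xh)
  (Hc : is_completion d dh i) :
  cofinally_bourbaki_quasi_complete dh ->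
  forall x, cofinally_bourbaki_quasi_cauchy d x -> has_cauchy_subseq d x.
Proof.
  intros H1 x Hx. destruct Hc as [Hm [Hcomp [Hi Hdense]]].
  destruct (H1 _ (cbqc_map d dh i Hi x Hx)) as [p Hp].
  destruct (extract (fun j n => dh (i (x n)) p < / (INR j + 1))) as [phi [Hphi HP]].
  { intros j K. apply Hp. apply Rinv_0_lt_compat. pose proof (pos_INR j). lra. }
  exists phi. split; auto.
  pose proof (rate_cauchy dh Hm (fun n => i (x (phi n))) p HP) as C.
  intros eps He. destruct (C eps He) as [N HN]. exists N. intros n m Hn Hm'.
  rewrite <- Hi. auto.
Qed.

Lemma p6_p1 {X Xh} (d : X -> X -> R) (dh : Xh -> Xh -> R) (i : X -> Xh)
  (Hd : is_metric d) (Hc : is_completion d dh i) :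
  (forall x, cofinally_bourbaki_quasi_cauchy d x -> has_cauchy_subseq d x) ->
  cofinally_bourbaki_quasi_complete dh.
Proof.
  intros H6 z Hz. destruct Hc as [Hm [Hcomp [Hi Hdense]]].
  pose proof Hm as [_ [_ [Hsym Htri]]].
  pose proof Hd as [_ [_ [Hsymd _]]].
  assert (Hpos : forall n, 0 < / (INR n + 1)).
  { intros n. apply Rinv_0_lt_compat. pose proof (pos_INR n). lra. }
  set (x := fun n => proj1_sig (constructive_indefinite_description _ (Hdense (z n) _ (Hpos n)))).
  assert (Hx : forall n, dh (z n) (i (x n)) < / (INR n + 1)).
  { intros n. unfold x. destruct (constructive_indefinite_description _ _). auto. }
  assert (Happ : forall e, 0 < e -> forall w, exists a, dh w (i a) < e).
  { intros e He w. apply Hdense; auto. }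
  assert (Hxq : cofinally_bourbaki_quasi_cauchy d x).
  { intros eps He. destruct (Hz (eps/3)) as [N [HN Hch]]; [lra|].
    destruct (small (eps/3)) as [J HJ]; [lra|].
    exists (fun n => N n /\ (J <= n)%nat). split.
    { intros k. destruct (HN (max k J)) as [n [Hn1 Hn2]]. exists n. split; [lia|].
      split; auto; lia. }
    intros j k [Nj Jj] [Nk Jk]. destruct (Hch j k Nj Nk) as [n [s [H0 [Hn Hs]]]].
    set (a := fun m => proj1_sig (constructive_indefinite_description _ (Happ (eps/3) ltac:(lra) (s m)))).
    assert (Ha : forall m, dh (s m) (i (a m)) < eps/3).
    { intros m. unfold a. destruct (constructive_indefinite_description _ _). auto. }
    assert (Hcha : eps_chain d eps (a 0%nat) (a n)).
    { exists n, a. split; auto. split; auto. intros m Hm'. rewrite <- Hi.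
      specialize (Hs m Hm'). pose proof (Ha m) as B1. pose proof (Ha (S m)) as B2.
      pose proof (Htri (i (a m)) (s m) (i (a (S m)))) as B3.
      pose proof (Htri (s m) (s (S m)) (i (a (S m)))) as B4.
      rewrite (Hsym (i (a m)) (s m)) in B3. lra. }
    apply chain_prepend with (a 0%nat).
    { rewrite <- Hi. pose proof (Ha 0%nat) as A1. rewrite H0 in A1. pose proof (Hx j) as A2.
      pose proof (HJ j Jj) as A3. pose proof (Htri (i (x j)) (z j) (i (a 0%nat))) as A4.
      rewrite (Hsym (i (x j)) (z j)) in A4. lra. }
    apply chain_append with (a n); auto.
    { rewrite <- Hi. pose proof (Ha n) as A1. rewrite Hn in A1. pose proof (Hx k) as A2.
      pose proof (HJ k Jk) as A3. pose proof (Htri (i (a n)) (z k) (i (x k))) as A4.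
      rewrite (Hsym (z k) (i (a n))) in A1. lra. } }
  destruct (H6 x Hxq) as [phi [Hphi Hcs]].
  assert (Hcs' : cauchy_seq dh (fun n => i (x (phi n)))).
  { intros e He. destruct (Hcs e He) as [N HN]. exists N. intros. rewrite Hi. auto. }
  destruct (Hcomp _ Hcs') as [p Hp]. exists p.
  intros eps He k. destruct (Hp (eps/2)) as [N HN]; [lra|].
  destruct (small (eps/2)) as [J HJ]; [lra|].
  set (j := max k (max N J)). exists (phi j).
  pose proof (phi_ge phi Hphi j). split; [lia|].
  pose proof (HN j ltac:(lia)). pose proof (Hx (phi j)). pose proof (HJ (phi j) ltac:(lia)).
  pose proof (Htri (z (phi j)) (i (x (phi j))) p). lra.
Qed.

Lemma nocluster {X} (d : X -> X -> R) (Hd : is_metric d) (x : nat -> X) :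
  ~ has_cauchy_subseq d x -> forall u, cauchy_seq d u ->
  exists eps, 0 < eps /\ exists K k0, forall n k, (K <= n)%nat -> (k0 <= k)%nat ->
    eps <= d (u k) (x n).
Proof.
  intros Hno u Hu. apply NNPP. intro H. apply Hno.
  pose proof Hd as [_ [_ [Hsym Htri]]].
  destruct (extract (fun j n => exists k, (j <= k)%nat /\ d (u k) (x n) < / (INR j + 1)))
    as [phi [Hphi HP]].
  { intros j K. apply NNPP. intro Hne. apply H. exists (/ (INR j + 1)). split.
    { apply Rinv_0_lt_compat. pose proof (pos_INR j). lra. }
    exists K, j. intros n k Hn Hk. apply Rnot_lt_le. intro Hlt. apply Hne.
    exists n. split; auto. exists k. auto. }
  exists phi. split; auto.
  intros eps He. destruct (Hu (eps/3)) as [M HM]; [lra|].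
  destruct (small (eps/3)) as [J HJ]; [lra|].
  exists (max M J). intros a b Ha Hb.
  destruct (HP a) as [ka [Hka Da]]. destruct (HP b) as [kb [Hkb Db]].
  pose proof (HJ a ltac:(lia)). pose proof (HJ b ltac:(lia)).
  pose proof (HM ka kb ltac:(lia) ltac:(lia)).
  pose proof (Htri (x (phi a)) (u ka) (x (phi b))) as T1.
  pose proof (Htri (u ka) (u kb) (x (phi b))) as T2.
  rewrite (Hsym (x (phi a)) (u ka)) in T1. lra.
Qed.

Definition psi {X} (d : X -> X -> R) (x : nat -> X) (n : nat) (y : X) : R :=
  Rmax 0 ((INR n + 1) - (INR n + 1)^2 * d y (x n)).

Lemma psi_nonneg {X} d (x : nat -> X) n y : 0 <= psi d x n y.
Proof. apply Rmax_l. Qed.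

Lemma psi_self {X} (d : X -> X -> R) x n : d (x n) (x n) = 0 -> psi d x n (x n) = INR n + 1.
Proof. intros H. unfold psi. rewrite H. pose proof (pos_INR n). rewrite Rmax_right; lra. Qed.

Lemma psi_zero {X} (d : X -> X -> R) x n y : / (INR n + 1) <= d y (x n) -> psi d x n y = 0.
Proof.
  intros H. unfold psi. pose proof (pos_INR n). apply Rmax_left.
  assert (H1 : 1 <= (INR n + 1) * d y (x n)).
  { assert (E : (INR n + 1) * / (INR n + 1) = 1) by (field; lra).
    rewrite <- E at 1. apply Rmult_le_compat_l; lra. }
  nra.
Qed.

Lemma psi_lip {X} (d : X -> X -> R) (Hd : is_metric d) x n a b :
  Rabs (psi d x n a - psi d x n b) <= (INR n + 1)^2 * d a b.
Proof.
  pose proof Hd as [_ [_ [Hsym Htri]]].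
  pose proof (Htri a b (x n)). pose proof (Htri b a (x n)). rewrite (Hsym b a) in H0.
  set (c := (INR n + 1)^2). assert (Hc : 0 <= c) by (unfold c; apply pow2_ge_0).
  assert (A1 : c * (d a (x n) - d b (x n)) <= c * d a b) by (apply Rmult_le_compat_l; lra).
  assert (A2 : c * (d b (x n) - d a (x n)) <= c * d a b) by (apply Rmult_le_compat_l; lra).
  unfold psi. fold c. apply Rabs_le. unfold Rmax.
  destruct (Rle_dec 0 (INR n + 1 - c * d a (x n))); destruct (Rle_dec 0 (INR n + 1 - c * d b (x n)));
    split; nra.
Qed.

Lemma sum_stab (g : nat -> R) K : (forall n, (K <= n)%nat -> g n = 0) ->
  forall M, (K <= M)%nat -> sum_f_R0 g M = sum_f_R0 g K.
Proof.
  intros H M. induction M; intros HM.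
  - replace K with 0%nat by lia. reflexivity.
  - destruct (Nat.eq_dec K (S M)) as [E|E]. { subst. reflexivity. }
    simpl. rewrite (H (S M)) by lia. rewrite IHM by lia. ring.
Qed.

Lemma sum_nonneg (g : nat -> R) : (forall n, 0 <= g n) -> forall M, 0 <= sum_f_R0 g M.
Proof. intros H M. induction M; simpl; auto. pose proof (H (S M)). lra. Qed.

Lemma sum_ge (g : nat -> R) : (forall n, 0 <= g n) -> forall m M, (m <= M)%nat -> g m <= sum_f_R0 g M.
Proof.
  intros H m M. induction M; intros HM.
  - replace m with 0%nat by lia. simpl. lra.
  - destruct (Nat.eq_dec m (S M)) as [E|E].
    + subst. simpl. pose proof (sum_nonneg g H M). lra.
    + simpl. pose proof (H (S M)). specialize (IHM ltac:(lia)). lra.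
Qed.

Lemma sum_lip (g1 g2 c : nat -> R) : (forall n, Rabs (g1 n - g2 n) <= c n) ->
  forall M, Rabs (sum_f_R0 g1 M - sum_f_R0 g2 M) <= sum_f_R0 c M.
Proof.
  intros H M. induction M; simpl; auto.
  replace (sum_f_R0 g1 M + g1 (S M) - (sum_f_R0 g2 M + g2 (S M)))
    with ((sum_f_R0 g1 M - sum_f_R0 g2 M) + (g1 (S M) - g2 (S M))) by ring.
  eapply Rle_trans. apply Rabs_triang. pose proof (H (S M)). lra.
Qed.

Lemma S_aux_bound (p e : R) k y : S_aux Rdist p e k y -> Rabs (y - p) < INR (S k) * e.
Proof.
  revert y. induction k; intros y H; simpl in H.
  - unfold Rdist in H. rewrite Rabs_minus_sym in H. simpl. lra.
  - destruct H as [z [Hz Hyz]]. specialize (IHk z Hz). unfold Rdist in Hyz.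
    rewrite S_INR. replace (y - p) with ((y - z) + (z - p)) by ring.
    eapply Rle_lt_trans. apply Rabs_triang. lra.
Qed.

Lemma p5_p6 {X} (d : X -> X -> R) (Hd : is_metric d) :
  (forall f : X -> R, cauchy_continuous d Rdist f ->
      forall x : nat -> X, cofinally_bourbaki_quasi_cauchy d x ->
      cofinally_bourbaki_cauchy Rdist (fun n => f (x n))) ->
  forall x, cofinally_bourbaki_quasi_cauchy d x -> has_cauchy_subseq d x.
Proof.
  intros H5 x Hx. apply NNPP. intro Hno.
  pose proof Hd as [Hnn [Hzero [Hsym Htri]]].
  pose proof (nocluster d Hd x Hno) as NC.
  assert (stab : forall y, exists K, forall n, (K <= n)%nat -> psi d x n y = 0).
  { intro y. destruct (NC (fun _ => y)) as [eps [He [K [k0 HK]]]].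
    { intros e He. exists 0%nat. intros. assert (d y y = 0) by (apply Hzero; auto). lra. }
    destruct (small eps He) as [J HJ]. exists (max K J). intros n Hn. apply psi_zero.
    specialize (HK n k0 ltac:(lia) ltac:(lia)). specialize (HJ n ltac:(lia)). lra. }
  set (Kf := fun y => proj1_sig (constructive_indefinite_description _ (stab y))).
  assert (HKf : forall y n, (Kf y <= n)%nat -> psi d x n y = 0).
  { intros y. unfold Kf. destruct (constructive_indefinite_description _ _). auto. }
  set (f := fun y => sum_f_R0 (fun n => psi d x n y) (Kf y)).
  assert (Hf_eq : forall y L, (forall n, (L <= n)%nat -> psi d x n y = 0) ->
            f y = sum_f_R0 (fun n => psi d x n y) L).
  { intros y L HL. unfold f.
    rewrite <- (sum_stab _ (Kf y) (HKf y) (max (Kf y) L)) by lia.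
    apply sum_stab; auto; lia. }
  assert (Hcc : cauchy_continuous d Rdist f).
  { intros u Hu. destruct (NC u Hu) as [eps [He [K [k0 HK]]]].
    destruct (small eps He) as [J HJ].
    set (L := max K J). set (C := sum_f_R0 (fun n => (INR n + 1)^2) L).
    assert (HC : 0 <= C) by (apply sum_nonneg; intros; apply pow2_ge_0).
    assert (Hfu : forall k, (k0 <= k)%nat -> f (u k) = sum_f_R0 (fun n => psi d x n (u k)) L).
    { intros k Hk. apply Hf_eq. intros n Hn. apply psi_zero.
      specialize (HK n k ltac:(lia) Hk). specialize (HJ n ltac:(lia)). lra. }
    intros e He'. destruct (Hu (e / (C + 1))) as [M HM].
    { apply Rdiv_lt_0_compat; lra. }
    exists (max M k0). intros n m Hn Hm. simpl. unfold Rdist. rewrite !Hfu by lia.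
    eapply Rle_lt_trans.
    { apply (sum_lip _ _ (fun n0 => (INR n0 + 1)^2 * d (u n) (u m))).
      intros; apply psi_lip; auto. }
    rewrite <- scal_sum. fold C.
    specialize (HM n m ltac:(lia) ltac:(lia)). pose proof (Hnn (u n) (u m)).
    assert (E : e / (C + 1) * C < e).
    { unfold Rdiv. apply Rmult_lt_reg_r with (C + 1); [lra|].
      replace (e * / (C + 1) * C * (C + 1)) with (e * C) by (field; lra). nra. }
    assert (d (u n) (u m) * C <= e / (C + 1) * C) by (apply Rmult_le_compat_r; lra).
    lra. }
  destruct (H5 f Hcc x Hx 1 Rlt_0_1) as [N [HN [m [p [Hm1 Hb]]]]].
  destruct (INR_unbounded (p + INR m)) as [B HB].
  destruct (HN B) as [n [Hn HNn]]. specialize (Hb n HNn). unfold S_ball in Hb.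
  apply S_aux_bound in Hb. replace (S (m - 1)) with m in Hb by lia.
  assert (Hfx : INR n + 1 <= f (x n)).
  { rewrite (Hf_eq (x n) (max (Kf (x n)) n)).
    2:{ intros; apply HKf; lia. }
    rewrite <- (psi_self d x n) by (apply Hzero; auto).
    apply (sum_ge (fun k => psi d x k (x n))). intros; apply psi_nonneg. lia. }
  apply le_INR in Hn. pose proof (Rle_abs (f (x n) - p)). lra.
Qed.

Theorem mainTheorem8 (X : Type) (d : X -> X -> R) (Hd : is_metric d)
  (Xh : Type) (dh : Xh -> Xh -> R) (i : X -> Xh) (Hc : is_completion d dh i) :
  let P1 := cofinally_bourbaki_quasi_complete dh in
  let P2 := forall (Y : Type) (rho : Y -> Y -> R), is_metric rho ->
      forall f : X -> Y, cauchy_continuous d rho f ->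
      forall x : nat -> X, cofinally_bourbaki_quasi_cauchy d x ->
      has_cauchy_subseq rho (fun n => f (x n)) in
  let P3 := forall (Y : Type) (rho : Y -> Y -> R), is_metric rho ->
      forall f : X -> Y, cauchy_continuous d rho f ->
      forall x : nat -> X, cofinally_bourbaki_quasi_cauchy d x ->
      cofinally_cauchy rho (fun n => f (x n)) in
  let P4 := forall (Y : Type) (rho : Y -> Y -> R), is_metric rho ->
      forall f : X -> Y, cauchy_continuous d rho f ->
      forall x : nat -> X, cofinally_bourbaki_quasi_cauchy d x ->
      cofinally_bourbaki_cauchy rho (fun n => f (x n)) in
  let P5 := forall f : X -> R, cauchy_continuous d Rdist f ->
      forall x : nat -> X, cofinally_bourbaki_quasi_cauchy d x ->
      cofinally_bourbaki_cauchy Rdist (fun n => f (x n)) in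
  let P6 := forall x : nat -> X, cofinally_bourbaki_quasi_cauchy d x ->
      has_cauchy_subseq d x in
  (P1 <-> P2) /\ (P1 <-> P3) /\ (P1 <-> P4) /\ (P1 <-> P5) /\ (P1 <-> P6).
Proof.
  intros P1 P2 P3 P4 P5 P6.
  assert (H16 : P1 -> P6) by exact (p1_p6 d dh i Hc).
  assert (H61 : P6 -> P1) by exact (p6_p1 d dh i Hd Hc).
  assert (H56 : P5 -> P6) by exact (p5_p6 d Hd).
  assert (H62 : P6 -> P2).
  { intros H6 Y rho Hr f Hf x Hx. destruct (H6 x Hx) as [phi [Hphi Hcs]].
    exists phi. split; auto. }
  assert (H23 : P2 -> P3).
  { intros H2 Y rho Hr f Hf x Hx. destruct (H2 Y rho Hr f Hf x Hx) as [phi [Hphi Hcs]].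
    intros eps He. destruct (Hcs eps He) as [K HK].
    exists (fun n => exists j, (K <= j)%nat /\ phi j = n). split.
    - intros k. exists (phi (max k K)). pose proof (phi_ge phi Hphi (max k K)).
      split; [lia|]. exists (max k K). split; auto; lia.
    - intros n m [j [Hj Ej]] [j' [Hj' Ej']]. subst. apply HK; auto. }
  assert (H34 : P3 -> P4).
  { intros H3 Y rho Hr f Hf x Hx eps He. destruct (H3 Y rho Hr f Hf x Hx eps He) as [N [HN HC]].
    exists N. split; auto. destruct (HN 0%nat) as [n0 [_ Hn0]].
    exists 1%nat, (f (x n0)). split; auto. intros n Hn. simpl. apply HC; auto. }
  assert (HR : is_metric Rdist).
  { split; [|split; [|split]].
    - intros; pose proof (Rdist_pos x y); lra.
    - apply Rdist_refl.
    - apply Rdist_sym.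
    - intros; apply Rdist_tri. }
  assert (H45 : P4 -> P5).
  { intros H4 f Hf x Hx. exact (H4 R Rdist HR f Hf x Hx). }
  repeat split; tauto.
Qed.
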